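(* Let $a,b,c,d>0$ and let $G_B:\mathbb R^2\to\mathbb R^2$ be given by $G_B(0)=0$ and $G_B(u)=\frac{1}{|u|}\big((au_1^2+bu_2^2)u_1,\ (cu_1^2+du_2^2)u_2\big)$ for $u\neq0$. (i) If $\frac{\max\{a,d\}}{2}-2\sqrt{ad}\le b+c\le 2\sqrt{ad}$, then $G_B$ is monotone. If $\frac{\max\{a,d\}}{2}-2\sqrt{ad}< b+c< 2\sqrt{ad}$, then $G_B$ is $3$-monotone. (ii) Let $M=\max\{a,d\}$ and $m=\min\{a,d\}$. (a) If $M/m\le16$, then the non-strict condition in (i) is equivalent to $b+c\le2\sqrt{ad}$, and the strict condition in (i) is equivalent to $b+c<2\sqrt{ad}$. (b) If $M/m=64$, then the non-strict condition in (i) is equivalent to $b+c=2\sqrt{ad}$, while the strict condition in (i) cannot hold. (c) If $M/m>64$, then the non-strict condition in (i) cannot hold.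
   Context: A map $F:\mathbb R^n\to\mathbb R^n$ is monotone if $(F(u)-F(v))\cdot(u-v)\ge0$ for all $u,v$; for $\alpha>0$ it is $\alpha$-monotone if there is $C>0$ with $(F(u)-F(v))\cdot(u-v)\ge C|u-v|^\alpha$ for all $u,v\in\mathbb R^n$. $|\cdot|$ is the Euclidean norm. *)

(* Defs.v *)
From Stdlib Require Import Reals Lra.
Open Scope R_scope.

Definition vec2 := (R * R)%type.

Definition dot2 (u v : vec2) : R := fst u * fst v + snd u * snd v.
Definition sub2 (u v : vec2) : vec2 := (fst u - fst v, snd u - snd v).
Definition norm2 (u : vec2) : R := sqrt (fst u ^ 2 + snd u ^ 2).

(* x^alpha for x >= 0 and real alpha > 0, with 0^alpha = 0
   (Stdlib's Rpower 0 alpha is 1, hence the case split). *)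
Definition rpow (x alpha : R) : R :=
  if Req_EM_T x 0 then 0 else Rpower x alpha.

Definition monotone2 (F : vec2 -> vec2) : Prop :=
  forall u v : vec2, 0 <= dot2 (sub2 (F u) (F v)) (sub2 u v).

Definition alpha_monotone2 (alpha : R) (F : vec2 -> vec2) : Prop :=
  exists C : R, 0 < C /\
    forall u v : vec2, C * rpow (norm2 (sub2 u v)) alpha <= dot2 (sub2 (F u) (F v)) (sub2 u v).

Definition G_B (a b c d : R) (u : vec2) : vec2 :=
  let u1 := fst u in let u2 := snd u in
  if Req_EM_T (norm2 u) 0 then (0, 0)
  else ((a * u1 ^ 2 + b * u2 ^ 2) * u1 / norm2 u,
        (c * u1 ^ 2 + d * u2 ^ 2) * u2 / norm2 u).

Definition cond_nonstrict (a b c d : R) : Prop :=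
  Rmax a d / 2 - 2 * sqrt (a * d) <= b + c <= 2 * sqrt (a * d).
Definition cond_strict (a b c d : R) : Prop :=
  Rmax a d / 2 - 2 * sqrt (a * d) < b + c < 2 * sqrt (a * d).

(* Main.v *)
Require Import Defs.
From Coquelicot Require Import Coquelicot.
From Stdlib Require Import Reals Lra Psatz.
Open Scope R_scope.
Lemma e0 a d S s : 0 < a -> 0 < d -> 0 <= s -> s*s = a*d -> 0 < S -> S <= 2*s -> a <= 2*S+4*s -> d <= 2*S+4*s ->
  0 <= 24*a*d - (2*S-d)^2.
Proof. intros. assert (-4*s <= 2*S-d <= 4*s) by lra. nra. Qed.
Lemma e2 a d S s : 0 < a -> 0 < d -> 0 <= s -> s*s = a*d -> 0 < S -> S <= 2*s -> a <= 2*S+4*s -> d <= 2*S+4*s ->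
  0 <= 24*a*d + 12*a*S - (S-a)^2.
Proof. intros.
 assert (a*(a - 2*S - 4*s) <= 0) by nra.
 nra. Qed.
Lemma e1 a d S s : 0 < a -> 0 < d -> 0 <= s -> s*s = a*d -> 0 < S -> S <= 2*s -> a <= 2*S+4*s -> d <= 2*S+4*s ->
  0 <= 52*a*d - 2*(S-a)*(2*S-d).
Proof. intros.
 destruct (Rle_dec a S); destruct (Rle_dec d (2*S)).
 - assert ((S-a)*(2*S-d) <= S*(2*S)) by nra. nra.
 - assert ((S-a)*(2*S-d) <= 0) by nra. nra.
 - assert ((S-a)*(2*S-d) <= 0) by nra. nra.
 - assert ((S-a)*(2*S-d) <= a*d) by nra. nra.
Qed.
Definition Dq a b c d X Y :=
  4*(2*a*X^2+3*a*X*Y+b*Y^2)*(c*X^2+3*d*X*Y+2*d*Y^2) - X*Y*((2*b+c-a)*X+(b+2*c-d)*Y)^2.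
Lemma E_nonneg a d S s X Y : 0 < a -> 0 < d -> 0 <= s -> s*s = a*d -> 0 < S -> S <= 2*s -> a <= 2*S+4*s -> d <= 2*S+4*s ->
  0 <= X -> 0 <= Y ->
  0 <= 8*a*S*X^3 + (24*a*d+12*a*S-(S-a)^2)*X^2*Y + (52*a*d-2*(S-a)*(2*S-d))*X*Y^2 + (24*a*d-(2*S-d)^2)*Y^3.
Proof. intros.
  assert (HH0 := e0 a d S s ltac:(assumption) ltac:(assumption) ltac:(assumption) ltac:(assumption) ltac:(assumption) ltac:(assumption) ltac:(assumption) ltac:(assumption)).
  assert (HH1 := e1 a d S s ltac:(assumption) ltac:(assumption) ltac:(assumption) ltac:(assumption) ltac:(assumption) ltac:(assumption) ltac:(assumption) ltac:(assumption)).
  assert (HH2 := e2 a d S s ltac:(assumption) ltac:(assumption) ltac:(assumption) ltac:(assumption) ltac:(assumption) ltac:(assumption) ltac:(assumption) ltac:(assumption)).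
  assert (0 <= X^3) by (apply pow_le; lra).
  assert (0 <= X^2*Y) by (apply Rmult_le_pos; [apply pow_le|];lra).
  assert (0 <= X*Y^2) by (apply Rmult_le_pos; [|apply pow_le];lra).
  assert (0 <= Y^3) by (apply pow_le; lra).
  assert (0 <= 8*a*S*X^3) by (apply Rmult_le_pos; [nra|lra]).
  assert (0 <= (24*a*d+12*a*S-(S-a)^2)*X^2*Y) by (rewrite Rmult_assoc; apply Rmult_le_pos; lra).
  assert (0 <= (52*a*d-2*(S-a)*(2*S-d))*X*Y^2) by (rewrite Rmult_assoc; apply Rmult_le_pos; lra).
  assert (0 <= (24*a*d-(2*S-d)^2)*Y^3) by (apply Rmult_le_pos; lra).
  lra.
Qed.
Lemma D_nonneg a b c d s X Y : 0 < a -> 0 < d -> 0 <= b -> 0 <= c -> 0 < b + c -> 0 <= s -> s*s = a*d ->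
  b + c <= 2*s -> a <= 2*(b+c)+4*s -> d <= 2*(b+c)+4*s -> 0 <= X -> 0 <= Y -> 0 <= Dq a b c d X Y.
Proof. intros.
  set (S := b + c).
  assert (HD0: Dq a 0 S d X Y = X * (8*a*S*X^3 + (24*a*d+12*a*S-(S-a)^2)*X^2*Y + (52*a*d-2*(S-a)*(2*S-d))*X*Y^2 + (24*a*d-(2*S-d)^2)*Y^3)) by (unfold Dq; ring).
  assert (HD1: Dq a S 0 d X Y = Y * (8*d*S*Y^3 + (24*d*a+12*d*S-(S-d)^2)*Y^2*X + (52*d*a-2*(S-d)*(2*S-a))*Y*X^2 + (24*d*a-(2*S-a)^2)*X^3)) by (unfold Dq; ring).
  assert (Hid: S * Dq a b c d X Y = c * Dq a 0 S d X Y + b * Dq a S 0 d X Y + S*b*c*(X*Y*(X+Y)^2)) by (unfold Dq, S; ring).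
  assert (0 <= Dq a 0 S d X Y). { rewrite HD0. apply Rmult_le_pos; auto. apply (E_nonneg a d S s); unfold S in *; lra. }
  assert (0 <= Dq a S 0 d X Y). { rewrite HD1. apply Rmult_le_pos; auto. apply (E_nonneg d a S s); unfold S in *; lra. }
  assert (0 <= S*b*c*(X*Y*(X+Y)^2)).
  { unfold S. assert (0 <= (X+Y)^2) by (apply pow_le; lra). assert (0<=X*Y) by nra. assert (0 <= (b+c)*b*c) by (apply Rmult_le_pos; nra). apply Rmult_le_pos; [lra|]. apply Rmult_le_pos; lra. }
  assert (0 <= S * Dq a b c d X Y) by (rewrite Hid; nra).
  apply (Rmult_le_reg_l S); unfold S in *; lra.
Qed.
Definition Fz a b c d x y w1 w2 := (a*x^2 + b*y^2)*x*w1 + (c*x^2 + d*y^2)*y*w2.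
Definition Fd a b c d x y w1 w2 := (3*a*x^2+b*y^2)*w1^2 + 2*(b+c)*x*y*w1*w2 + (c*x^2+3*d*y^2)*w2^2.
Lemma deriv_psi a b c d v1 v2 w1 w2 t : (v1+t*w1)^2+(v2+t*w2)^2 > 0 ->
  is_derive (fun t => Fz a b c d (v1+t*w1) (v2+t*w2) w1 w2 / sqrt ((v1+t*w1)^2+(v2+t*w2)^2)) t
   (let x := v1+t*w1 in let y := v2+t*w2 in let r := sqrt (x^2+y^2) in
    (r*r*Fd a b c d x y w1 w2 - Fz a b c d x y w1 w2 * (x*w1+y*w2)) / (r^3)).
Proof.
  intros H. unfold Fz. auto_derive.
  - split. nra. split; [|auto]. apply Rgt_not_eq. apply sqrt_lt_R0. nra.
  - cbv zeta. unfold Fd.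
    replace ((v1 + t * w1) * ((v1 + t * w1) * 1) + (v2 + t * w2) * ((v2 + t * w2) * 1)) with ((v1+t*w1)^2+(v2+t*w2)^2) by ring.
    assert (Hr: sqrt ((v1+t*w1)^2+(v2+t*w2)^2) > 0) by (apply sqrt_lt_R0; nra).
    set (r := sqrt ((v1+t*w1)^2+(v2+t*w2)^2)) in *.
    field. lra.
Qed.
Definition Nq a b c d x y w1 w2 :=
  (2*a*(x^2)^2+3*a*x^2*y^2+b*(y^2)^2)*w1^2 + ((2*b+c-a)*x^3*y + (b+2*c-d)*x*y^3)*w1*w2
  + (c*(x^2)^2+3*d*x^2*y^2+2*d*(y^2)^2)*w2^2.
Lemma Nq_id a b c d x y w1 w2 r : r*r = x^2+y^2 ->
  r*r*Fd a b c d x y w1 w2 - Fz a b c d x y w1 w2 * (x*w1+y*w2) = Nq a b c d x y w1 w2.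
Proof. intros H. rewrite H. unfold Fd, Fz, Nq. ring. Qed.
Lemma Nq_nonneg a b c d s x y w1 w2 : 0 < a -> 0 < d -> 0 <= b -> 0 <= c -> 0 < b + c -> 0 <= s -> s*s = a*d ->
  b + c <= 2*s -> a <= 2*(b+c)+4*s -> d <= 2*(b+c)+4*s -> 0 <= Nq a b c d x y w1 w2.
Proof. intros.
  assert (HD := D_nonneg a b c d s (x^2) (y^2) ltac:(assumption) ltac:(assumption) ltac:(assumption) ltac:(assumption) ltac:(assumption) ltac:(assumption) ltac:(assumption) ltac:(assumption) ltac:(assumption) ltac:(assumption) ltac:(apply pow2_ge_0) ltac:(apply pow2_ge_0)).
  set (A := 2*a*(x^2)^2+3*a*x^2*y^2+b*(y^2)^2).
  set (B := (2*b+c-a)*x^3*y + (b+2*c-d)*x*y^3).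
  assert (Hid: 4*A*Nq a b c d x y w1 w2 = (2*A*w1 + B*w2)^2 + Dq a b c d (x^2) (y^2) * w2^2) by (unfold A, B, Nq, Dq; ring).
  assert (Hx2: 0 <= x^2) by (apply pow2_ge_0). assert (Hy2: 0<=y^2) by (apply pow2_ge_0).
  assert (T0: 0 <= x^2*y^2) by (apply Rmult_le_pos; auto). assert (T1: 0 <= (x^2)^2) by (apply pow2_ge_0). assert (T2: 0 <= (y^2)^2) by (apply pow2_ge_0).
  assert (T3: 0 <= a*(x^2)^2) by (apply Rmult_le_pos; lra). assert (T4: 0 <= a*x^2*y^2) by (rewrite Rmult_assoc; apply Rmult_le_pos; lra). assert (T5: 0 <= b*(y^2)^2) by (apply Rmult_le_pos; lra).
  assert (HA: 0 <= A) by (unfold A; lra).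
  destruct (Req_dec A 0) as [HA0|HA0].
  - assert (x = 0). { unfold A in HA0.
       assert (Ha0: a*(x^2)^2 = 0) by lra.
       assert (Hx4: (x^2)^2 = 0). { destruct (Rmult_integral _ _ Ha0); lra. }
       assert (Hq: x^2*x^2 = 0) by (rewrite <- Hx4; ring).
       assert (Hq2: x^2 = 0) by (destruct (Rmult_integral _ _ Hq); lra).
       assert (Hq3: x*x = 0) by (rewrite <- Hq2; ring).
       destruct (Rmult_integral _ _ Hq3); lra. }
    subst x. unfold Nq. 
    assert (0 <= (c*(0^2)^2+3*d*0^2*y^2+2*d*(y^2)^2)*w2^2).
    { apply Rmult_le_pos; [|apply pow2_ge_0]. replace (0^2) with 0 by ring. nra. }
    replace (0^2) with 0 by ring. replace (0^3) with 0 by ring. nra.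
  - assert (0 < 4*A) by lra.
    assert (0 <= w2^2) by (apply pow2_ge_0).
    assert (0 <= Dq a b c d (x^2) (y^2) * w2^2) by (apply Rmult_le_pos; lra).
    assert (0 <= 4*A*Nq a b c d x y w1 w2) by (rewrite Hid; assert (0 <= (2*A*w1 + B*w2)^2) by (apply pow2_ge_0); lra).
    nra.
Qed.

Lemma dotG a b c d z w : norm2 z <> 0 ->
  dot2 (G_B a b c d z) w = Fz a b c d (fst z) (snd z) (fst w) (snd w) / norm2 z.
Proof.
  intros H. unfold G_B. destruct (Req_EM_T (norm2 z) 0) as [e|e]; [contradiction|].
  unfold dot2, Fz. simpl. field. exact H.
Qed.

Lemma dot_scale a b c d l w1 w2 : w1^2+w2^2 > 0 ->
  dot2 (G_B a b c d (l*w1, l*w2)) (w1,w2) = l * Rabs l * (Fz a b c d w1 w2 w1 w2 / sqrt (w1^2+w2^2)).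
Proof.
  intros Hw. assert (Hr: sqrt (w1^2+w2^2) > 0) by (apply sqrt_lt_R0; lra).
  destruct (Req_dec l 0) as [Hl|Hl].
  - subst l. unfold G_B. destruct (Req_EM_T _ 0) as [e|e].
    + unfold dot2; simpl; ring.
    + exfalso. apply e. unfold norm2. unfold fst, snd. replace ((0*w1)^2+(0*w2)^2) with 0 by ring. apply sqrt_0.
  - assert (Hn: norm2 (l*w1, l*w2) = Rabs l * sqrt (w1^2+w2^2)).
    { unfold norm2. unfold fst, snd. replace ((l*w1)^2+(l*w2)^2) with (l^2 * (w1^2+w2^2)) by ring.
      rewrite sqrt_mult_alt. rewrite <- sqrt_Rsqr_abs. unfold Rsqr. f_equal. f_equal. ring.
      apply pow2_ge_0. }
    assert (Habs: Rabs l > 0) by (apply Rabs_pos_lt; auto).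
    rewrite dotG. rewrite Hn. unfold fst, snd. unfold Fz.
    destruct (Rcase_abs l).
    + rewrite Rabs_left by auto. field. lra.
    + rewrite Rabs_right by auto. field. lra.
    + rewrite Hn. apply Rgt_not_eq. apply Rmult_lt_0_compat; lra.
Qed.

Lemma mono_gen a b c d s : 0 < a -> 0 < d -> 0 <= b -> 0 <= c -> 0 < b + c -> 0 <= s -> s*s = a*d ->
  b + c <= 2*s -> a <= 2*(b+c)+4*s -> d <= 2*(b+c)+4*s -> monotone2 (G_B a b c d).
Proof.
  intros ha hd hb hc hS hs hss h1 h2 h3.
  assert (Key: forall v1 v2 w1 w2,
     0 <= dot2 (G_B a b c d (v1+w1, v2+w2)) (w1,w2) - dot2 (G_B a b c d (v1,v2)) (w1,w2)).
  { intros v1 v2 w1 w2.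
    destruct (Req_dec (v1*w2 - v2*w1) 0) as [Hc|Hc].
    - destruct (Req_dec (w1^2+w2^2) 0) as [Hw|Hw].
      + assert (w1 = 0) by nra. assert (w2 = 0) by nra. subst. unfold dot2; unfold fst, snd. lra.
      + assert (Hwp: w1^2+w2^2 > 0) by (assert (0 <= w1^2) by apply pow2_ge_0; assert (0<=w2^2) by apply pow2_ge_0; lra).
        set (mu := (v1*w1+v2*w2)/(w1^2+w2^2)).
        assert (E1: v1 = mu*w1).
        { unfold mu. assert (v1*(w1^2+w2^2) = (v1*w1+v2*w2)*w1).
          { apply Rminus_diag_uniq. replace (v1*(w1^2+w2^2) - (v1*w1+v2*w2)*w1) with (w2*(v1*w2-v2*w1)) by ring. rewrite Hc. ring. }
          field_simplify_eq; [|lra]. lra. }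
        assert (E2: v2 = mu*w2).
        { unfold mu. assert (v2*(w1^2+w2^2) = (v1*w1+v2*w2)*w2).
          { apply Rminus_diag_uniq. replace (v2*(w1^2+w2^2) - (v1*w1+v2*w2)*w2) with (-w1*(v1*w2-v2*w1)) by ring. rewrite Hc. ring. }
          field_simplify_eq; [|lra]. lra. }
        assert (E3: (v1+w1, v2+w2) = ((mu+1)*w1, (mu+1)*w2)) by (rewrite E1, E2; f_equal; ring).
        assert (E4: (v1, v2) = (mu*w1, mu*w2)) by (rewrite <- E1, <- E2; reflexivity).
        rewrite E3, E4, !dot_scale by exact Hwp.
        assert (HK: 0 <= Fz a b c d w1 w2 w1 w2 / sqrt (w1^2+w2^2)).
        { unfold Rdiv. apply Rmult_le_pos.
          - unfold Fz. assert (0 <= w1^2*w2^2) by (apply Rmult_le_pos; apply pow2_ge_0).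
            assert (0 <= (w1^2)^2) by apply pow2_ge_0. assert (0 <= (w2^2)^2) by apply pow2_ge_0.
            replace ((a * w1 ^ 2 + b * w2 ^ 2) * w1 * w1 + (c * w1 ^ 2 + d * w2 ^ 2) * w2 * w2)
              with (a*(w1^2)^2 + (b+c)*(w1^2*w2^2) + d*(w2^2)^2) by ring. nra.
          - left. apply Rinv_0_lt_compat. apply sqrt_lt_R0. lra. }
        assert (mu*Rabs mu <= (mu+1)*Rabs (mu+1)).
        { destruct (Rcase_abs mu); destruct (Rcase_abs (mu+1));
            [rewrite (Rabs_left mu), (Rabs_left (mu+1)) by auto
            |rewrite (Rabs_left mu), (Rabs_right (mu+1)) by auto
            |rewrite (Rabs_right mu), (Rabs_left (mu+1)) by auto
            |rewrite (Rabs_right mu), (Rabs_right (mu+1)) by auto]; nra. }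
        nra.
    - assert (Hpos: forall t, (v1+t*w1)^2+(v2+t*w2)^2 > 0).
      { intros t. assert (0 <= (v1+t*w1)^2) by apply pow2_ge_0. assert (0 <= (v2+t*w2)^2) by apply pow2_ge_0.
        destruct (Req_dec ((v1+t*w1)^2+(v2+t*w2)^2) 0) as [Z|Z]; [|lra].
        exfalso. apply Hc. assert (v1+t*w1 = 0) by nra. assert (v2+t*w2 = 0) by nra.
        replace v1 with (-(t*w1)) by lra. replace v2 with (-(t*w2)) by lra. ring. }
      set (f := fun t => Fz a b c d (v1+t*w1) (v2+t*w2) w1 w2 / sqrt ((v1+t*w1)^2+(v2+t*w2)^2)).
      set (df := fun t => let x := v1+t*w1 in let y := v2+t*w2 in let r := sqrt (x^2+y^2) in
               (r*r*Fd a b c d x y w1 w2 - Fz a b c d x y w1 w2 * (x*w1+y*w2)) / (r^3)).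
      assert (Hd: forall t, is_derive f t (df t)) by (intros t; apply deriv_psi; apply Hpos).
      assert (Hdf: forall t, 0 <= df t).
      { intros t. unfold df. cbv zeta.
        assert (Hr: sqrt ((v1+t*w1)^2+(v2+t*w2)^2) > 0) by (apply sqrt_lt_R0; apply Hpos).
        rewrite Nq_id.
        - unfold Rdiv. apply Rmult_le_pos.
          + apply (Nq_nonneg a b c d s); assumption.
          + left. apply Rinv_0_lt_compat. apply pow_lt. lra.
        - apply sqrt_sqrt. left. apply Hpos. }
      destruct (MVT_cor4 f df 0 1 (fun c _ => Hd c) 1) as [t [Ht _]].
      { rewrite Rminus_0_r, Rabs_R1. lra. }
      assert (F1: f 1 = dot2 (G_B a b c d (v1+w1, v2+w2)) (w1,w2)).
      { rewrite dotG.
        - unfold f, norm2, fst, snd. rewrite !Rmult_1_l. reflexivity.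
        - unfold norm2, fst, snd. apply Rgt_not_eq. apply sqrt_lt_R0.
          pose proof (Hpos 1). rewrite !Rmult_1_l in H. exact H. }
      assert (F0: f 0 = dot2 (G_B a b c d (v1, v2)) (w1,w2)).
      { rewrite dotG.
        - unfold f, norm2, fst, snd. rewrite !Rmult_0_l, !Rplus_0_r. reflexivity.
        - unfold norm2, fst, snd. apply Rgt_not_eq. apply sqrt_lt_R0.
          pose proof (Hpos 0). rewrite !Rmult_0_l, !Rplus_0_r in H. exact H. }
      rewrite <- F1, <- F0, Ht. pose proof (Hdf t). nra. }
  intros [u1 u2] [v1 v2].
  pose proof (Key v1 v2 (u1-v1) (u2-v2)) as K.
  replace (v1 + (u1-v1)) with u1 in K by ring. replace (v2 + (u2-v2)) with u2 in K by ring.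
  unfold dot2, sub2 in *. cbn [fst snd] in *.
  destruct (G_B a b c d (u1,u2)) as [gg1 gg2]. destruct (G_B a b c d (v1,v2)) as [hh1 hh2].
  cbn [fst snd] in *. lra.
Qed.

Lemma norm2_sq z : norm2 z * norm2 z = fst z ^2 + snd z ^2.
Proof. unfold norm2. apply sqrt_sqrt. assert (0 <= fst z^2) by apply pow2_ge_0. assert (0 <= snd z^2) by apply pow2_ge_0. lra. Qed.
Lemma norm2_ge0 z : 0 <= norm2 z.
Proof. unfold norm2. apply sqrt_pos. Qed.

Lemma G_split a b c d e z :
  G_B a b c d z = (fst (G_B (a-e) (b-e) (c-e) (d-e) z) + e * norm2 z * fst z,
                   snd (G_B (a-e) (b-e) (c-e) (d-e) z) + e * norm2 z * snd z).
Proof.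
  pose proof (norm2_sq z) as Hq.
  unfold G_B. destruct (Req_EM_T (norm2 z) 0) as [H|H].
  - rewrite H. cbn [fst snd]. f_equal; ring.
  - cbn [fst snd].
    assert (Hx: forall t, e * norm2 z * t = e*(fst z^2+snd z^2)*t / norm2 z) by (intros; rewrite <- Hq; field; auto).
    rewrite !Hx. f_equal; field; auto.
Qed.

Lemma pow3_mono u v :
  / 2 * norm2 (sub2 u v) ^ 3 <=
  dot2 (sub2 (norm2 u * fst u, norm2 u * snd u) (norm2 v * fst v, norm2 v * snd v)) (sub2 u v).
Proof.
  destruct u as [u1 u2], v as [v1 v2].
  pose proof (norm2_sq (u1,u2)) as Hu. pose proof (norm2_sq (v1,v2)) as Hv.
  pose proof (norm2_sq (sub2 (u1,u2) (v1,v2))) as Hw.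
  pose proof (norm2_ge0 (u1,u2)). pose proof (norm2_ge0 (v1,v2)). pose proof (norm2_ge0 (sub2 (u1,u2) (v1,v2))).
  set (ru := norm2 (u1,u2)) in *. set (rv := norm2 (v1,v2)) in *. set (rw := norm2 (sub2 (u1,u2) (v1,v2))) in *.
  unfold dot2, sub2 in *. cbn [fst snd] in *.
  assert (CS: -(u1*v1+u2*v2) <= ru*rv).
  { assert ((u1*v1+u2*v2)^2 <= (ru*rv)^2).
    { replace ((ru*rv)^2) with ((ru*ru)*(rv*rv)) by ring. rewrite Hu, Hv.
      assert (0 <= (u1*v2-u2*v1)^2) by apply pow2_ge_0. nra. }
    assert (0 <= ru*rv) by nra. nra. }
  assert (Hle: rw <= ru + rv).
  { assert (rw*rw <= (ru+rv)*(ru+rv)) by nra. nra. }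
  assert (Id: (ru*u1 - rv*v1)*(u1-v1) + (ru*u2-rv*v2)*(u2-v2) = (ru+rv)*(/2*(rw*rw) + /2*(ru-rv)^2)).
  { rewrite Hw. replace ((ru*u1 - rv*v1)*(u1-v1) + (ru*u2-rv*v2)*(u2-v2)) with
      (ru*(u1^2+u2^2) + rv*(v1^2+v2^2) - (ru+rv)*(u1*v1+u2*v2)) by ring.
    replace ((u1 - v1) ^ 2 + (u2 - v2) ^ 2) with ((u1^2+u2^2) + (v1^2+v2^2) - 2*(u1*v1+u2*v2)) by ring.
    rewrite <- Hu, <- Hv. field. }
  rewrite Id.
  assert (0 <= (ru-rv)^2) by apply pow2_ge_0.
  assert (rw^3 <= (ru+rv)*(rw*rw)) by (replace (rw^3) with (rw*(rw*rw)) by ring; apply Rmult_le_compat_r; nra).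
  nra.
Qed.

Lemma rpow3 x : 0 <= x -> rpow x 3 = x^3.
Proof.
  intros Hx. unfold rpow. destruct (Req_EM_T x 0) as [H|H].
  - subst. ring.
  - replace 3 with (INR 3) by (simpl; ring). rewrite Rpower_pow by lra. reflexivity.
Qed.

Theorem mainTheorem6 (a b c d : R) (ha : 0 < a) (hb : 0 < b) (hc : 0 < c) (hd : 0 < d) :
  (* (i) *)
  (cond_nonstrict a b c d -> monotone2 (G_B a b c d)) /\
  (cond_strict a b c d -> alpha_monotone2 3 (G_B a b c d)) /\
  (* (ii)(a) *)
  (Rmax a d / Rmin a d <= 16 ->
     (cond_nonstrict a b c d <-> b + c <= 2 * sqrt (a * d)) /\
     (cond_strict a b c d <-> b + c < 2 * sqrt (a * d))) /\
  (* (ii)(b) *)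
  (Rmax a d / Rmin a d = 64 ->
     (cond_nonstrict a b c d <-> b + c = 2 * sqrt (a * d)) /\
     ~ cond_strict a b c d) /\
  (* (ii)(c) *)
  (Rmax a d / Rmin a d > 64 -> ~ cond_nonstrict a b c d).
Proof.
  assert (Hs0: 0 < sqrt (a*d)) by (apply sqrt_lt_R0; nra).
  assert (Hss: sqrt (a*d) * sqrt (a*d) = a*d) by (apply sqrt_sqrt; nra).
  set (s := sqrt (a*d)) in *.
  assert (HMm: Rmax a d * Rmin a d = a*d /\ 0 < Rmin a d /\ Rmin a d <= Rmax a d /\ a <= Rmax a d /\ d <= Rmax a d
               /\ Rmin a d <= a /\ Rmin a d <= d).
  { unfold Rmax, Rmin. destruct (Rle_dec a d); repeat split; lra || ring. }
  destruct HMm as [HMm [Hm0 [HmM [HaM [HdM [Hma Hmd]]]]]].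
  set (M := Rmax a d) in *. set (m := Rmin a d) in *.
  unfold cond_nonstrict, cond_strict. fold s. fold M.
  split; [|split; [|split; [|split]]].
  - intros [H1 H2]. apply (mono_gen a b c d s); lra.
  - intros [H1 H2].
    set (S := b + c) in *.
    set (g1 := 2*s - S). set (g2 := S - (M/2 - 2*s)).
    assert (g1 > 0) by (unfold g1; lra). assert (g2 > 0) by (unfold g2; lra).
    set (K := s / m).
    assert (HK: 0 < K) by (unfold K; apply Rdiv_lt_0_compat; lra).
    set (T := 2/m + 2/b + 2/c + (2*K+2)/g1 + (4*K+4)/g2).
    assert (T1: 0 < 2/m) by (apply Rdiv_lt_0_compat; lra).
    assert (T2: 0 < 2/b) by (apply Rdiv_lt_0_compat; lra).
    assert (T3: 0 < 2/c) by (apply Rdiv_lt_0_compat; lra).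
    assert (T4: 0 < (2*K+2)/g1) by (apply Rdiv_lt_0_compat; lra).
    assert (T5: 0 < (4*K+4)/g2) by (apply Rdiv_lt_0_compat; lra).
    assert (HT: 0 < T) by (unfold T; lra).
    set (e := / T).
    assert (He: 0 < e) by (apply Rinv_0_lt_compat; lra).
    assert (Hle: forall p, 0 < p -> p <= T -> e * p <= 1).
    { intros p Hp HpT. unfold e. apply (Rmult_le_reg_l T); [lra|].
      rewrite <- Rmult_assoc, Rinv_r by lra. lra. }
    assert (Em: e * (2/m) <= 1) by (apply Hle; unfold T; lra).
    assert (Eb: e * (2/b) <= 1) by (apply Hle; unfold T; lra).
    assert (Ec: e * (2/c) <= 1) by (apply Hle; unfold T; lra).
    assert (E1: e * ((2*K+2)/g1) <= 1) by (apply Hle; unfold T; lra).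
    assert (E2: e * ((4*K+4)/g2) <= 1) by (apply Hle; unfold T; lra).
    assert (em: 2*e <= m) by (unfold Rdiv in Em; apply (Rmult_le_reg_r (/m)); [apply Rinv_0_lt_compat; lra|];
       rewrite Rinv_r by lra; lra).
    assert (eb: 2*e <= b) by (unfold Rdiv in Eb; apply (Rmult_le_reg_r (/b)); [apply Rinv_0_lt_compat; lra|];
       rewrite Rinv_r by lra; lra).
    assert (ec: 2*e <= c) by (unfold Rdiv in Ec; apply (Rmult_le_reg_r (/c)); [apply Rinv_0_lt_compat; lra|];
       rewrite Rinv_r by lra; lra).
    assert (e1: e*(2*K+2) <= g1) by (unfold Rdiv in E1; apply (Rmult_le_reg_r (/g1)); [apply Rinv_0_lt_compat; lra|];
       rewrite Rmult_assoc, Rinv_r by lra; lra).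
    assert (e2: e*(4*K+4) <= g2) by (unfold Rdiv in E2; apply (Rmult_le_reg_r (/g2)); [apply Rinv_0_lt_compat; lra|];
       rewrite Rmult_assoc, Rinv_r by lra; lra).
    set (s' := sqrt ((a-e)*(d-e))).
    assert (Hs'2: s'*s' = (a-e)*(d-e)) by (apply sqrt_sqrt; nra).
    assert (Hs'0: 0 <= s') by apply sqrt_pos.
    assert (Hks: K*m = s) by (unfold K; field; lra).
    assert (Hlow: s - e*K <= s').
    { assert (A1: a*(m-e) <= (a-e)*m) by nra.
      assert (A2: d*(m-e) <= (d-e)*m) by nra.
      assert (0 <= m - e) by lra.
      assert (A3: (a*d)*((m-e)*(m-e)) <= ((a-e)*(d-e))*(m*m)).
      { replace ((a*d)*((m-e)*(m-e))) with ((a*(m-e))*(d*(m-e))) by ring.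
        replace (((a-e)*(d-e))*(m*m)) with (((a-e)*m)*((d-e)*m)) by ring.
        apply Rmult_le_compat; nra. }
      assert (A4: (s*(m-e))*(s*(m-e)) <= (s'*m)*(s'*m)).
      { replace ((s*(m-e))*(s*(m-e))) with ((s*s)*((m-e)*(m-e))) by ring.
        replace ((s'*m)*(s'*m)) with ((s'*s')*(m*m)) by ring. rewrite Hss, Hs'2. exact A3. }
      assert (A5: s*(m-e) <= s'*m).
      { assert (0 <= s'*m) by (apply Rmult_le_pos; lra).
        destruct (Rle_dec (s*(m-e)) (s'*m)) as [|Hn]; auto. apply Rnot_le_lt in Hn.
        assert ((s'*m)*(s'*m) < (s*(m-e))*(s*(m-e))) by (apply Rmult_le_0_lt_compat; lra). lra. }
      assert (A6: (s - e*K)*m <= s'*m) by (rewrite <- Hks in A5 |- *; nra).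
      apply (Rmult_le_reg_r m); lra. }
    assert (HM': Rmax (a-e) (d-e) = M - e).
    { unfold M, Rmax. destruct (Rle_dec (a-e) (d-e)); destruct (Rle_dec a d); lra. }
    assert (Hmono: monotone2 (G_B (a-e) (b-e) (c-e) (d-e))).
    { assert (X1: e*(2*K+2) = 2*(e*K) + 2*e) by ring.
      assert (X2: e*(4*K+4) = 4*(e*K) + 4*e) by ring.
      assert (X3: 0 <= e*K) by nra.
      unfold g1, g2, S in *.
      apply (mono_gen (a-e) (b-e) (c-e) (d-e) s'); lra. }
    exists (e / 2). split; [lra|].
    intros u v.
    rewrite rpow3 by apply norm2_ge0.
    pose proof (Hmono u v) as Hm.
    pose proof (pow3_mono u v) as Hp.
    rewrite (G_split a b c d e u), (G_split a b c d e v).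
    destruct (G_B (a-e) (b-e) (c-e) (d-e) u) as [p1 p2]. destruct (G_B (a-e) (b-e) (c-e) (d-e) v) as [q1 q2].
    destruct u as [u1 u2], v as [v1 v2].
    unfold dot2, sub2 in *. cbn [fst snd] in *.
    set (N3 := norm2 (u1 - v1, u2 - v2) ^ 3) in *.
    nra.
  - intros H16.
    assert (HM16: M <= 16*m).
    { unfold Rdiv in H16. apply (Rmult_le_reg_r (/m)); [apply Rinv_0_lt_compat; lra|].
      rewrite Rmult_assoc, Rinv_r by lra. lra. }
    assert (M <= 4*s) by nra.
    split; split; intros; try lra; split; lra.
  - intros H64.
    assert (HM64: M = 64*m).
    { unfold Rdiv in H64. apply (Rmult_eq_reg_r (/m)); [|apply Rinv_neq_0_compat; lra].
      rewrite Rmult_assoc, Rinv_r by lra. lra. }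
    assert (s = 8*m) by nra.
    split; [split|]; intros; try lra.
  - intros H64.
    assert (HM64: M > 64*m).
    { unfold Rdiv in H64. apply (Rmult_gt_reg_l (/m)); [apply Rinv_0_lt_compat; lra|].
      rewrite (Rmult_comm (/m) M), (Rmult_comm (/m) (64*m)), Rmult_assoc, Rinv_r by lra. lra. }
    assert (M > 8*s) by nra.
    lra.
Qed.
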